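(* Let $F$ be a finite field of characteristic $3$. Let $k\ge 0$ be an integer, $m=3k+1$, and $t$ an integer with $t^3\equiv 1\pmod m$ and $\gcd(m,t-1)=1$. Let $G=T_{3m}=\langle x,y\mid x^m=y^3=1,\ y^{-1}xy=x^t\rangle$ (of order $3m$), $FG$ its group algebra, and $H=\langle x\rangle$. Then $\dim_F Z(\Delta(G,H))=k$.
   Context: $\Delta(G,H)$ is the ideal of $FG$ generated by $\{h-1\mid h\in H\}$; $Z(R)$ denotes the center of a ring $R$. *)

(* Defs.v *)
From HB Require Import structures.
From mathcomp Require Import all_boot all_order all_algebra all_fingroup all_field.
Set Implicit Arguments. Unset Strict Implicit. Unset Printing Implicit Defensive.
Import GRing.Theory.
Local Open Scope ring_scope.

(* The group algebra F[gT] of a finite group gT over a field F, modelled as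
   the F-vector space of functions gT -> F (F^o = F as a module over itself),
   with convolution product. *)

Section GroupAlgebra.
Variables (F : fieldType) (gT : finGroupType).

Definition gbas (g : gT) : {ffun gT -> F^o} := [ffun h => (h == g)%:R].

Definition gmul (a b : {ffun gT -> F^o}) : {ffun gT -> F^o} :=
  [ffun g => \sum_(h : gT) (a h : F) * (b (h^-1 * g)%g : F)].

(* Delta(G,H): the two-sided ideal of F[G] generated by {h - 1 | h in H};
   it is the F-span of the elements a (h - 1) b with a, b group elements. *)
Definition augIdeal (H : {set gT}) : {vspace {ffun gT -> F^o}} :=
  <<[seq gmul (gmul (gbas p.1.1) (gbas p.2 - gbas 1%g)) (gbas p.1.2)
     | p <- enum [set q : (gT * gT) * gT | q.2 \in H]]>>%VS.

End GroupAlgebra.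

(* Main.v *)
Require Import Defs.
From HB Require Import structures.
From mathcomp Require Import all_boot all_order all_algebra all_fingroup all_field.
From mathcomp Require Import all_solvable zify.
Import GRing.Theory.
Set Implicit Arguments. Unset Strict Implicit. Unset Printing Implicit Defensive.
Local Open Scope ring_scope.

Section Alg.
Variables (F : fieldType) (gT : finGroupType).
Implicit Types (z w : {ffun gT -> F^o}) (p g h a b c : gT).

Lemma sum_delta (f : gT -> F) a :
  \sum_(h : gT) f h * (h == a)%:R = f a.
Proof.
rewrite (bigD1 a) //= eqxx mulr1 big1 ?addr0 // => h /negbTE ->.
by rewrite mulr0.
Qed.

Lemma gmul_gbasr z p : gmul z (gbas F p) = [ffun g => z (g * p^-1)%g].
Proof.
apply/ffunP=> g; rewrite !ffunE -(sum_delta (fun h => z h)).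
apply: eq_bigr => h _; rewrite ffunE; congr (_ * _%:R).
congr (nat_of_bool _); apply/eqP/eqP => E.
  by rewrite -E invMg invgK mulgA mulgV mul1g.
by rewrite E invMg invgK mulgVK.
Qed.

Lemma gmul_gbasl z p : gmul (gbas F p) z = [ffun g => z (p^-1 * g)%g].
Proof.
apply/ffunP=> g; rewrite !ffunE.
rewrite (eq_bigr (fun h => z (h^-1 * g)%g * (h == p)%:R)); first exact: sum_delta.
by move=> h _; rewrite ffunE mulrC.
Qed.

Lemma gmulBr z w1 w2 : gmul z (w1 - w2) = gmul z w1 - gmul z w2.
Proof.
apply/ffunP=> g; rewrite !ffunE -sumrB; apply: eq_bigr => h _.
by rewrite !ffunE mulrBr.
Qed.

Lemma gmulBl z w1 w2 : gmul (w1 - w2) z = gmul w1 z - gmul w2 z.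
Proof.
apply/ffunP=> g; rewrite !ffunE -sumrB; apply: eq_bigr => h _.
by rewrite !ffunE mulrBl.
Qed.

Lemma classfun_central z w :
  (forall u v, z (u ^ v)%g = z u) -> gmul z w = gmul w z.
Proof.
move=> cz; apply/ffunP=> g; rewrite !ffunE.
rewrite [RHS](reindex_inj (inj_comp (mulIg g) (@invg_inj gT))) /=.
apply: eq_bigr => a _.
rewrite mulrC; congr (_ * _).
by rewrite invMg invgK -mulgA -conjgE cz.
Qed.


Lemma gbasM a c : gmul (gbas F a) (gbas F c) = gbas F (a * c)%g.
Proof.
rewrite gmul_gbasl; apply/ffunP=> g; rewrite !ffunE; congr (nat_of_bool _)%:R.
apply/eqP/eqP => E; first by rewrite -E mulKVg.
by rewrite E mulKg.
Qed.

Lemma gen_eq a b h :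
  gmul (gmul (gbas F a) (gbas F h - gbas F (1%g : gT))) (gbas F b)
  = gbas F (a * h * b)%g - gbas F (a * b)%g.
Proof. by rewrite gmulBr !gbasM mulg1 gmulBl !gbasM. Qed.

Section Normal.
Variable H : {group gT}.
Hypothesis nH : forall g : gT, g \in ('N(H))%g.

Definition cs z a := \sum_(h in H) z (a * h)%g.

Lemma cs_gbas a b : cs (gbas F b) a = ((a^-1 * b)%g \in H)%:R.
Proof.
rewrite /cs; case: (boolP (_ \in H)) => Hab.
  rewrite (bigD1 (a^-1 * b)%g) //= ffunE mulKVg eqxx big1 ?addr0 // => h /andP[_ hn].
  rewrite ffunE; case: eqP => // E; case/eqP: hn; by rewrite -E mulKg.
rewrite big1 // => h hH; rewrite ffunE; case: eqP => // E.
by case/negP: Hab; rewrite -E mulKg.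
Qed.

Lemma csB z w a : cs (z - w) a = cs z a - cs w a.
Proof. rewrite /cs -sumrB; apply: eq_bigr => h _. by rewrite !ffunE. Qed.

Lemma cs_sum n (c : 'I_n -> F) (v : 'I_n -> {ffun gT -> F^o}) a :
  cs (\sum_i c i *: v i) a = \sum_i c i * cs (v i) a.
Proof.
rewrite /cs; under eq_bigr do rewrite sum_ffunE.
rewrite exchange_big /=; apply: eq_bigr => i _; rewrite mulr_sumr.
by apply: eq_bigr => h _; rewrite ffunE.
Qed.

Lemma cs_aug z : z \in augIdeal F H -> forall a, cs z a = 0.
Proof.
rewrite /augIdeal -[X in <<X>>%VS]in_tupleE => zX a.
rewrite (coord_span zX) cs_sum big1 // => i _.
set X := (in_tuple _); have /mapP[[[p1 p3] p2] pin ->] : X`_i \in (X : seq _).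
  exact: mem_nth.
move: pin; rewrite mem_enum inE /= => p2H.
rewrite gen_eq csB !cs_gbas.
have -> : (a^-1 * (p1 * p2 * p3) = (a^-1 * (p1 * p3)) * p2 ^ p3)%g.
  by rewrite conjgE !mulgA mulgK.
by rewrite groupMr ?subrr ?mulr0 // memJ_norm.
Qed.


Definition csum (C : {set gT}) : {ffun gT -> F^o} := [ffun g => (g \in C)%:R].

Lemma sum_ind (C : {set gT}) u : \sum_(g in C) ((u == g)%:R : F) = (u \in C)%:R.
Proof.
case: (boolP (u \in C)) => uC.
  by rewrite (bigD1 u) //= eqxx big1 ?addr0 // => g /andP[_ /negbTE]; rewrite eq_sym => ->.
by rewrite big1 // => g gC; case: eqP => // E; case/negP: uC; rewrite E.
Qed.

Lemma gen_in a b h : h \in H ->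
  gbas F (a * h * b)%g - gbas F (a * b)%g \in augIdeal F H.
Proof.
move=> hH; rewrite -gen_eq; apply: memv_span; apply/mapP.
by exists ((a, b), h) => //; rewrite mem_enum inE.
Qed.

Lemma csum_aug (C : {set gT}) : C \subset H -> (#|C|%:R : F) = 0 ->
  csum C \in augIdeal F H.
Proof.
move=> sCH Cz.
have -> : csum C = \sum_(g in C) (gbas F g - gbas F (1%g : gT)).
  apply/ffunP => u; rewrite sum_ffunE ffunE.
  under eq_bigr do rewrite !ffunE.
  by rewrite sumrB sumr_const sum_ind -[_ *+ #|C|]mulr_natr (_ : (#|C|%:R : F^o) = 0) ?mulr0 ?subr0.
apply: rpred_sum => g gC.
have := gen_in 1 1 (subsetP sCH g gC); by rewrite mul1g !mulg1.
Qed.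

Lemma reindexH (f : gT -> F) a b :
  \sum_(h in H) f (a * (h^-1) ^ b)%g = \sum_(h in H) f (a * h)%g.
Proof.
have inj : injective (fun h : gT => (h^-1) ^ b)%g.
  exact: (inj_comp (conjg_inj b) (@invg_inj gT)).
rewrite [RHS](reindex_inj inj) /=; apply: eq_bigl => h.
by rewrite memJ_norm // groupV.
Qed.

Lemma central_classfun z :
  (forall a, cs z a = 0) -> (#|H|%:R : F) = 1 ->
  (forall w, w \in augIdeal F H -> gmul z w = gmul w z) ->
  forall u v, z (u ^ v)%g = z u.
Proof.
move=> csz Hm cen.
have key : forall u g, z (u * g^-1)%g = z (g^-1 * u)%g.
  move=> u g.
  have E : forall h, h \in H -> z (u * (g * h)^-1)%g - z (u * g^-1)%g
                            = z ((g * h)^-1 * u)%g - z (g^-1 * u)%g.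
    move=> h hH; have := cen _ (gen_in g 1 hH); rewrite !mulg1.
    rewrite gmulBr gmulBl !gmul_gbasr !gmul_gbasl => /ffunP /(_ u).
    by rewrite !ffunE.
  have : \sum_(h in H) (z (u * (g * h)^-1)%g - z (u * g^-1)%g)
       = \sum_(h in H) (z ((g * h)^-1 * u)%g - z (g^-1 * u)%g) by apply: eq_bigr.
  rewrite !sumrB !sumr_const.
  have -> : \sum_(h in H) z (u * (g * h)^-1)%g = 0.
    rewrite -[RHS](csz (u * g^-1)%g) /cs -(reindexH (fun x => z x) (u * g^-1)%g (g^-1)%g).
    by apply: eq_bigr => h _; rewrite invMg conjgE invgK !mulgA mulgVK.
  have -> : \sum_(h in H) z ((g * h)^-1 * u)%g = 0.
    rewrite -[RHS](csz (g^-1 * u)%g) /cs -(reindexH (fun x => z x) (g^-1 * u)%g (g^-1 * u)%g).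
    by apply: eq_bigr => h _; rewrite conjgE mulVKg invMg mulgA.
  have Hm' : forall c : F^o, c *+ #|H| = c.
    by move=> c; rewrite -mulr_natr (_ : (#|H|%:R : F^o) = 1) ?mulr1.
  by rewrite !Hm' !sub0r => /oppr_inj.
move=> u v; rewrite conjgE -{2}(mulgK v u) key; by rewrite mulgA.
Qed.

End Normal.
End Alg.
Section Grp.
Variables (gT : finGroupType) (k : nat) (t : int) (x y : gT).
Local Notation m := (3 * k + 1)%N.
Hypotheses (cop : coprimez m%:Z (t - 1)) (xm : (x ^+ m = 1)%g) (y3 : (y ^+ 3 = 1)%g)
  (xy : (x ^ y = x ^+ `|(t %% m%:Z)%Z|%N)%g) (gen : <<[set x; y]>>%g = [set: gT])
  (card : #|gT| = (3 * m)%N).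
Local Open Scope group_scope.
Local Notation H := <[x]>.

Lemma nH : forall g : gT, g \in 'N(H).
Proof.
have yN : y \in 'N(H).
  apply/normP; rewrite -cycleJ; apply/eqP.
  by rewrite eqEcard cycle_subG {1}xy mem_cycle cycleJ cardJg leqnn.
have : <<[set x; y]>> \subset 'N(H).
  by rewrite gen_subG subUset !sub1set yN (subsetP (normG H)) ?cycle_id.
by rewrite gen => /subsetP sN g; apply: sN; rewrite inE.
Qed.

Lemma ordx : #[x] = m.
Proof.
have dx : (#[x] %| m)%N by rewrite order_dvdn xm.
have dy : (#[y] %| 3)%N by rewrite order_dvdn y3.
have sy : <[y]> \subset 'N(H) by apply/subsetP => g _; apply: nH.
have sT : [set: gT] \subset H * <[y]>.
  rewrite -gen -norm_joinEr // gen_subG subUset !sub1set.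
  by rewrite (subsetP (joing_subl _ _)) ?cycle_id // (subsetP (joing_subr _ _)) ?cycle_id.
have le1 : (3 * m <= #[x] * #[y])%N.
  rewrite -card -cardsT (leq_trans (subset_leq_card sT)) // !orderE mul_cardG.
  by rewrite leq_pmulr // cardG_gt0.
have m0 : (0 < m)%N by rewrite addn1.
have := dvdn_leq m0 dx.
have := dvdn_leq (isT : (0 < 3)%N) dy.
move: le1; set a := #[x]; set b := #[y] => le1 lb la.
apply/eqP; rewrite eqn_leq la /=.
have : (3 * m <= a * 3)%N by rewrite (leq_trans le1) // leq_mul2l lb orbT.
by rewrite mulnC leq_mul2r.
Qed.


Lemma m_gt0 : (0 < m)%N. Proof. by rewrite addn1. Qed.

Lemma y_not_cent h : h \in H -> h != 1 -> y \notin 'C[h].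
Proof.
move=> /cycleP[i ->] hn1; apply: contra hn1 => /cent1P c.
have E : (x ^+ i) ^ y = x ^+ i by rewrite conjgE -c mulKg.
move: E; rewrite conjXg xy -expgnA => /eqP; rewrite eq_expg_mod_order ordx => /eqP E.
have mi : (m %| i)%N.
  have : (m%:Z %| (i%:Z * (t - 1))%R)%Z.
    rewrite mulrBr mulr1 -eqz_mod_dvd.
    have := congr1 Posz E; rewrite -!modz_nat PoszM abszE.
    rewrite Num.Theory.ger0_norm ?modz_ge0 ?addn1 // => E2; apply/eqP; rewrite mulrC -modzMml; exact: E2.
  by rewrite Gauss_dvdzl // dvdzE.
by rewrite -order_dvdn ordx.
Qed.


Lemma cardH : #|H| = m. Proof. by rewrite -orderE ordx. Qed.

Lemma cent_eq h : h \in H -> h != 1 -> 'C[h] = H.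
Proof.
move=> hH hn1.
have sHC : H \subset 'C[h] by rewrite sub_cent1 (subsetP (cycle_abelian x)).
have dC : (#|'C[h]| %| 3 * m)%N by rewrite -card -cardsT cardSg ?subsetT.
have dH : (m %| #|'C[h]|)%N by rewrite -cardH cardSg.
have nC : #|'C[h]| != (3 * m)%N.
  apply: contraNneq (y_not_cent hH hn1) => E.
  have -> : 'C[h] = [set: gT] by apply/eqP; rewrite eqEcard subsetT cardsT card E leqnn.
  by rewrite in_setT.
apply/eqP; rewrite eq_sym eqEcard sHC /= cardH.
case/dvdnP: dH nC dC => d ->; rewrite dvdn_pmul2r ?m_gt0 //.
case: d => [|[|[|[|d]]]] //; first by rewrite mul1n.
by rewrite eqxx.
Qed.

Lemma class3 h : h \in H -> h != 1 -> #|h ^: [set: gT]| = 3%N.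
Proof.
move=> hH hn1; rewrite -index_cent1 setTI cent_eq // -divgS ?subsetT //.
by rewrite cardsT card cardH mulnK ?m_gt0.
Qed.


Lemma coset_conj v h : v \notin H -> h \in H -> exists2 a, a \in H & v * h = v ^ a.
Proof.
move=> vH hH.
have inj : {in H &, injective (fun a => v ^ a)}.
  move=> a b aH bH /= E.
  have Ec : v ^ (a * b^-1) = v by rewrite conjgM E conjgK.
  apply/eqP; rewrite eq_mulgV1; apply: contraR vH => cn1.
  rewrite -(cent_eq _ cn1); last by rewrite groupM ?groupV.
  by apply/cent1P; rewrite /commute conjgC Ec.
have sub : [set v ^ a | a in H] \subset v *: H.
  apply/subsetP => _ /imsetP[a aH ->]; rewrite mem_lcoset.
  have -> : v^-1 * v ^ a = (a^-1) ^ v * a by rewrite !conjgE !mulgA.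
  by rewrite groupM ?memJ_norm ?groupV ?nH.
have eqS : [set v ^ a | a in H] = v *: H.
  by apply/eqP; rewrite eqEcard sub card_lcoset (card_in_imset inj) leqnn.
have : v * h \in v *: H by rewrite mem_lcoset mulKg.
by rewrite -eqS => /imsetP[a aH ->]; exists a.
Qed.


Local Open Scope ring_scope.

Lemma main (F : finFieldType) : 3%N \in [pchar F] ->
  exists V : {vspace {ffun gT -> F^o}},
    (forall z, z \in V <->
       (z \in augIdeal F <[x]>%g /\
        forall w, w \in augIdeal F <[x]>%g -> gmul z w = gmul w z))
    /\ \dim V = k.
Proof.
move=> pc.
have F3 : (3%:R : F^o) = 0 := pcharf0 pc.
have Fm : (m%:R : F^o) = 1 by rewrite natrD natrM F3 mul0r add0r.
have HmF : (#|H|%:R : F) = 1 by rewrite cardH.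
have nH' := nH.
pose P := [set (h ^: [set: gT])%g | h in (H^#)%g].
have actsP : [acts [set: gT], on (H^#)%g | 'J].
  by apply/subsetP => g _; rewrite astabsJ normD1 nH.
have partP : partition P (H^#)%g by apply: (orbit_partition actsP).
have PH : forall C, C \in P -> C \subset H.
  move=> C CP; have : C \subset cover P by rewrite /cover (bigcup_sup C CP).
  rewrite (cover_partition partP) => sub; apply: subset_trans sub _.
  exact: subsetDl.
have P3 : forall C, C \in P -> #|C| = 3%N.
  move=> C /imsetP[h]; rewrite !inE => /andP[hn1 hH] ->; exact: class3.
have cardP : #|P| = k.
  have := card_uniform_partition P3 partP.
  have := cardsD1 1%g H; rewrite group1 cardH add1n addn1 => -[<-].
  move=> E; apply/eqP; rewrite -(eqn_pmul2r (isT : (0 < 3)%N)); apply/eqP.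
  rewrite [RHS]mulnC; exact: (esym E).
pose X := [seq csum F C | C <- enum P].
have classJ : forall u v h : gT, ((u ^ v)%g \in (h ^: [set: gT])%g)
                                = (u \in (h ^: [set: gT])%g).
  move=> u v h; apply/class_eqP/class_eqP => <-; by rewrite classGidl ?inE.
have sX : size X = #|P| by rewrite size_map cardE.
have Xi : forall i : nat, (i < size X)%N ->
    X`_i = csum F (nth set0 (enum P) i).
  by move=> i; rewrite size_map => ilt; rewrite (nth_map set0).
exists <<X>>%VS; split.
  move=> z; split.
    move=> zV.
    have zA : z \in augIdeal F H.
      move: z zV; apply/subvP/span_subvP => _ /mapP[C CP ->].
      rewrite mem_enum in CP; apply: csum_aug; first exact: PH.
      by rewrite P3 //; exact: F3.
    split => // w _; apply: classfun_central => u v.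
    move: zV; rewrite -[Y in <<Y>>%VS]in_tupleE => /coord_span ->.
    rewrite !sum_ffunE; apply: eq_bigr => i _; rewrite !ffunE Xi // !ffunE.
    have ilt : (i < size (enum P))%N by rewrite -(size_map (@csum F gT)) ltn_ord.
    have : nth set0 (enum P) i \in P by rewrite -mem_enum mem_nth.
    by case/imsetP => h hH ->; rewrite classJ.
  case=> zA cen.
  have csz := cs_aug nH zA.
  have cf := central_classfun nH csz HmF cen.
  have zE : z = \sum_(C in P) z (repr C) *: csum F C.
    apply/ffunP => u; rewrite sum_ffunE.
    under eq_bigr do rewrite ffunE ffunE.
    case: (boolP (u \in (H^#)%g)) => uH.
      rewrite (bigD1 (u ^: [set: gT])%g) /=; last exact: imset_f.
      rewrite [X in _ + X]big1 ?addr0.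
        rewrite class_refl -[_ *: _]/(_ * 1) mulr1.
        have : repr (u ^: [set: gT])%g \in (u ^: [set: gT])%g.
          exact: (mem_repr u (class_refl _ _)).
        by case/imsetP => g _ ->; rewrite cf.
      move=> C /andP[CP nC]; case: (boolP (u \in C)) => uC; last by rewrite scaler0.
      case/imsetP: CP nC uC => g _ -> nC /class_eqP Eug.
      by rewrite Eug eqxx in nC.
    rewrite big1 => [|C CP]; last first.
      suff -> : (u \in C) = false by rewrite scaler0.
      apply/negbTE; apply: contra uH => uC; rewrite -(cover_partition partP).
      by apply/bigcupP; exists C.
    case: (eqVneq u 1%g) => [-> | u1].
      have := csz 1%g; rewrite /cs.
      under eq_bigr do rewrite mul1g.
      rewrite (bigD1 1%g) //= (eq_bigl (fun h => h \in (H^#)%g)) => [|h]; last first.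
        by rewrite !inE andbC.
      rewrite -(cover_partition partP) big_trivIset ?(partition_trivIset partP) //.
      rewrite big1 ?addr0 // => C /imsetP[g]; rewrite !inE => /andP[gn1 gH] ->.
      rewrite (eq_bigr (fun _ => z g)) => [|h /imsetP[a _ ->]]; last by rewrite cf.
      by rewrite sumr_const class3 // -mulr_natr F3 mulr0.
    have uH' : u \notin H by apply: contra uH => uH'; rewrite !inE u1.
    have := csz u; rewrite /cs (eq_bigr (fun _ => z u)) => [|h hH]; last first.
      by have [a aH ->] := coset_conj uH' hH; rewrite cf.
    by rewrite sumr_const -mulr_natr (_ : (#|H|%:R : F^o) = 1) ?mulr1.
  rewrite zE; apply: rpred_sum => C CP; apply: rpredZ; apply: memv_span.
  by apply: map_f; rewrite mem_enum.
have freeX : free (in_tuple X).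
  apply/freeP => c Hc i.
  have ilt : (i < size (enum P))%N by rewrite -(size_map (@csum F gT)) ltn_ord.
  have : nth set0 (enum P) i \in P by rewrite -mem_enum mem_nth.
  case/imsetP => h hH EC.
  have := congr1 (fun f : {ffun gT -> F^o} => f h) Hc.
  rewrite sum_ffunE ffunE (bigD1 i) //= big1 ?addr0.
    by rewrite ffunE Xi // ffunE EC class_refl; rewrite -[_ *: _]/(c i * 1) mulr1.
  move=> j ji; rewrite ffunE Xi // ffunE.
  have jlt : (j < size (enum P))%N by rewrite -(size_map (@csum F gT)) ltn_ord.
  case: (boolP (h \in _)) => hj; last by rewrite scaler0.
  have : nth set0 (enum P) j \in P by rewrite -mem_enum mem_nth.
  case/imsetP => g gH Ej; move: hj; rewrite Ej => /class_eqP Ehg.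
  have : nth set0 (enum P) j == nth set0 (enum P) i by rewrite Ej EC Ehg.
  rewrite nth_uniq ?enum_uniq // => /eqP /val_inj E.
  by rewrite E eqxx in ji.
by move: freeX => /eqP ->; rewrite /= sX.
Qed.
End Grp.

Unset Implicit Arguments.
Theorem corollary3p13 (F : finFieldType) (gT : finGroupType) (k : nat) (t : int)
    (x y : gT) :
  3%N \in [pchar F] ->
  let m := (3 * k + 1)%N in
  (t ^+ 3 == 1 %[mod m%:Z])%Z ->
  coprimez m%:Z (t - 1) ->
  (x ^+ m = 1)%g -> (y ^+ 3 = 1)%g ->
  (x ^ y = x ^+ `|(t %% m%:Z)%Z|%N)%g ->
  <<[set x; y]>>%g = [set: gT] ->
  #|gT| = (3 * m)%N ->
  exists V : {vspace {ffun gT -> F^o}},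
    (forall z, z \in V <->
       (z \in augIdeal F <[x]>%g /\
        forall w, w \in augIdeal F <[x]>%g -> gmul z w = gmul w z))
    /\ \dim V = k.
Proof.
move=> pc m _ cop xm y3 xy gen card.
exact: (main cop xm y3 xy gen card pc).
Qed.
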